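(* Let $G = (N,\Sigma,R,S)$ be a linear context-free grammar. Then there exists a test set $T \subseteq L(G)$ for $L(G)$ containing at most $2|R|^3$ words, where $|R|$ is the number of production rules of $G$.
   Context: A context-free grammar is $G=(N,\Sigma,R,S)$ with non-terminals $N$, terminals $\Sigma$, productions $R \subseteq N \times (N\uplus\Sigma)^*$ (written $A \to \mathit{rhs}$), start symbol $S$; $L(G)$ is the set of words over $\Sigma$ it generates. $G$ is linear if every right-hand side contains at most one non-terminal occurrence. A morphism $f:\Sigma^*\to\Gamma^*$ satisfies $f(\epsilon)=\epsilon$ and $f(uv)=f(u)f(v)$. For a language $L\subseteq\Sigma^*$, a subset $T\subseteq L$ is a test set for $L$ if for every alphabet $\Gamma$ and any two morphisms $f,g:\Sigma^*\to\Gamma^*$, if $f(w)=g(w)$ for all $w\in T$ then $f(w)=g(w)$ for all $w\in L$. *)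

(* Defs.v *)
From mathcomp Require Import all_boot.
Set Implicit Arguments. Unset Strict Implicit. Unset Printing Implicit Defensive.

(* A context-free grammar G = (N, Sigma, R, S): nonterminals N and terminals
   Sigma are finite types; a symbol is [inl A] (nonterminal) or [inr a]
   (terminal); productions are pairs (A, rhs). *)
Record cfg (N Sigma : finType) := Cfg {
  rules : seq (N * seq (N + Sigma));
  start : N
}.

Definition nrules (N Sigma : finType) (G : cfg N Sigma) : nat :=
  size (undup (rules G)).

Inductive gen (N Sigma : finType) (G : cfg N Sigma) : N -> seq Sigma -> Prop :=
| gen_rule A rhs w : (A, rhs) \in rules G -> gen_rhs G rhs w -> gen G A w
with gen_rhs (N Sigma : finType) (G : cfg N Sigma) : seq (N + Sigma) -> seq Sigma -> Prop :=
| gen_nil : gen_rhs G [::] [::]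
| gen_term a rhs w : gen_rhs G rhs w -> gen_rhs G (inr a :: rhs) (a :: w)
| gen_nonterm B rhs u v :
    gen G B u -> gen_rhs G rhs v -> gen_rhs G (inl B :: rhs) (u ++ v).

Definition lang (N Sigma : finType) (G : cfg N Sigma) (w : seq Sigma) : Prop :=
  gen G (start G) w.

Definition is_nonterm (N Sigma : Type) (x : N + Sigma) : bool :=
  if x is inl _ then true else false.

Definition linear (N Sigma : finType) (G : cfg N Sigma) : Prop :=
  forall p, p \in rules G -> count (@is_nonterm N Sigma) p.2 <= 1.

Definition is_morphism (Sigma Gamma : Type) (f : seq Sigma -> seq Gamma) : Prop :=
  f [::] = [::] /\ forall u v, f (u ++ v) = f u ++ f v.

Definition test_set (Sigma : finType) (L : seq Sigma -> Prop) (T : seq (seq Sigma)) : Prop :=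
  (forall w, w \in T -> L w) /\
  forall (Gamma : finType) (f g : seq Sigma -> seq Gamma),
    is_morphism f -> is_morphism g ->
    (forall w, w \in T -> f w = g w) ->
    forall w, L w -> f w = g w.

(* Main.v *)
Require Import Defs.
From HB Require Import structures.
From mathcomp Require Import all_boot all_order all_algebra.
From mathcomp Require Import ring zify.
From Stdlib Require Import Lia.
From Stdlib Require Import Classical ClassicalEpsilon.
Set Implicit Arguments. Unset Strict Implicit. Unset Printing Implicit Defensive.

Section Aff.
Import GRing.Theory.
Local Open Scope ring_scope.

Definition aff := {p : rat * rat | p.1 != 0}.
HB.instance Definition _ := Choice.on aff.

Lemma aff1_subproof : ((1 : rat), (0 : rat)).1 != 0. Proof. exact: oner_neq0. Qed.
Definition aff_one : aff := exist (fun p : rat * rat => p.1 != 0) (1, 0) aff1_subproof.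
Lemma affmul_subproof (x y : aff) :
  ((val x).1 * (val y).1, (val x).2 * (val y).1 + (val y).2).1 != 0.
Proof. by rewrite /= mulf_neq0 //; [case: x|case: y]. Qed.
Definition aff_mul (x y : aff) : aff := exist (fun p : rat * rat => p.1 != 0) _ (affmul_subproof x y).
Lemma affinv_subproof (x : aff) : ((val x).1^-1, - ((val x).2 / (val x).1)).1 != 0.
Proof. by rewrite /= invr_eq0; case: x. Qed.
Definition aff_inv (x : aff) : aff := exist (fun p : rat * rat => p.1 != 0) _ (affinv_subproof x).

Lemma aff_mulA : associative aff_mul.
Proof. move=> [[a b] ha] [[c d] hc] [[e h] he]; apply: val_inj => /=; congr (_, _); ring. Qed.
Lemma aff_mul1 : left_id aff_one aff_mul.
Proof. move=> [[a b] ha]; apply: val_inj => /=; congr (_, _); ring. Qed.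
Lemma aff_mulg1 : right_id aff_one aff_mul.
Proof. move=> [[a b] ha]; apply: val_inj => /=; congr (_, _); ring. Qed.
Lemma aff_mulV : left_inverse aff_one aff_inv aff_mul.
Proof. move=> [[a b] ha]; apply: val_inj => /=; congr (_, _); field; exact ha. Qed.
Lemma aff_mulgV : right_inverse aff_one aff_inv aff_mul.
Proof. move=> [[a b] ha]; apply: val_inj => /=; congr (_, _); field; exact ha. Qed.

HB.instance Definition _ := isGroup.Build aff aff_mulA aff_mul1 aff_mulg1 aff_mulV aff_mulgV.
End Aff.

Section RatCT.
Import GRing.Theory.
Local Open Scope ring_scope.
Lemma rat_CT (a b c d e h : rat) : (c, d) != (1, 0) ->
  b * c + d = d * a + b -> d * e + h = h * c + d -> b * e + h = h * a + b.
Proof.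
move=> hy h1 h2.
case: (eqVneq c 1) => [c1|c1].
- subst c.
  have d0 : d != 0 by move: hy; apply: contra => /eqP ->.
  have E1 : d * (a - 1) = 0.
    have -> : d * (a - 1) = (d * a + b) - (b * 1 + d) by ring.
    by rewrite -h1 subrr.
  have E2 : d * (e - 1) = 0.
    have -> : d * (e - 1) = (d * e + h) - (h * 1 + d) by ring.
    by rewrite h2 subrr.
  move/eqP: E1; rewrite mulf_eq0 (negbTE d0) subr_eq0 => /eqP ->.
  move/eqP: E2; rewrite mulf_eq0 (negbTE d0) subr_eq0 => /eqP ->.
  ring.
- have c1' : c - 1 != 0 by rewrite subr_eq0.
  apply/eqP; rewrite -subr_eq0 -(mulIr_eq0 _ (mulIf c1')).
  have -> : (b * e + h - (h * a + b)) * (c - 1) =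
     (e - 1) * ((b * c + d) - (d * a + b)) + (a - 1) * ((d * e + h) - (h * c + d)) by ring.
  by rewrite h1 h2 !subrr !mulr0 addr0.
Qed.
End RatCT.

Section AffCT.
Local Open Scope group_scope.
Lemma aff_CT (x y z : aff) : y != 1 -> commute x y -> commute y z -> commute x z.
Proof.
move: x y z => [[a b] ha] [[c d] hc] [[e h] he].
rewrite /commute -!(inj_eq val_inj) => hy /(congr1 val) /= [_ h1] /(congr1 val) /= [_ h2].
apply: val_inj => /=.
rewrite (GRing.mulrC a e); congr (_, _).
exact: (rat_CT hy h1 h2).
Qed.

End AffCT.

Section Enc.
Variable Gam : finType.
Definition base : nat := #|Gam|.+2.
Definition dig (x : Gam) : nat := enum_rank x.
Definition numn (w : seq Gam) : nat := foldl (fun acc x => acc * base + dig x) 0 w.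

Lemma foldl_numn z w : foldl (fun acc x => acc * base + dig x) z w = z * base ^ size w + numn w.
Proof.
elim: w z => [|x w IH] z /=; first by rewrite muln1 addn0.
rewrite /numn /= !IH mul0n add0n expnS; ring.
Qed.

Lemma numn_cat u v : numn (u ++ v) = numn u * base ^ size v + numn v.
Proof. by rewrite /numn foldl_cat foldl_numn. Qed.

Lemma numn_rcons u x : numn (rcons u x) = numn u * base + dig x.
Proof. by rewrite -cats1 numn_cat /= /numn /= expn1. Qed.

Lemma dig_lt x : dig x < base.
Proof. rewrite /dig /base; apply: (leq_trans (ltn_ord _)); exact: leq_trans (leqnSn _) (leqnSn _). Qed.

Lemma numn_inj u v : size u = size v -> numn u = numn v -> u = v.
Proof.
elim/last_ind: u v => [|u x IH] v.
  by case: v.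
elim/last_ind: v => [|v y _]; first by rewrite size_rcons.
rewrite !size_rcons !numn_rcons => [[hs]] he.
have hb : 0 < base by [].
have h1 : dig x = dig y.
  by move: (congr1 (modn^~ base) he); rewrite !modnMDl !modn_small // dig_lt.
have h2 : numn u = numn v.
  by move: (congr1 (divn^~ base) he); rewrite !divnMDl // !divn_small ?dig_lt // !addn0.
by rewrite (IH v hs h2) (enum_rank_inj (val_inj h1)).
Qed.

Import GRing.Theory Num.Theory.
Local Open Scope ring_scope.

Lemma enc_subproof (w : seq Gam) : ((base%:R : rat) ^+ size w, (numn w)%:R : rat).1 != 0.
Proof. by rewrite /= expf_neq0 // pnatr_eq0. Qed.

Definition enc (w : seq Gam) : aff := exist (fun p : rat * rat => p.1 != 0) _ (enc_subproof w).

Lemma enc_cat u v : enc (u ++ v) = (enc u * enc v)%g.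
Proof.
apply: val_inj => /=; rewrite size_cat exprD numn_cat natrD natrM natrX //.
Qed.

Lemma enc_nil : enc [::] = 1%g.
Proof. by apply: val_inj. Qed.

Lemma enc_inj : injective enc.
Proof.
move=> u v /(congr1 val) /= [h1 h2].
have hs : size u = size v.
  apply: (@expnI base) => //; apply/eqP; rewrite -(eqr_nat rat) !natrX; exact/eqP.
by apply: numn_inj => //; apply/eqP; rewrite -(eqr_nat rat); exact/eqP.
Qed.
End Enc.
Section GroupLemmas.
Local Open Scope group_scope.

Lemma key_agree (H : groupType) (l0 l r0 r f0 f g0 g : H) :
  l0 * f0 * r0 = g0 -> l * f0 * r = g0 -> l0 * f * r0 = g ->
  (l * f * r = g <-> commute (l0^-1 * l) (f * f0^-1)).
Proof.
move=> h00 h10 h01.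
set lam := l0^-1 * l; set z := f * f0^-1.
have hl : l = l0 * lam by rewrite /lam mulVKg.
have hf : f = z * f0 by rewrite /z mulgVK.
have hr : r = f0^-1 * lam^-1 * f0 * r0.
  apply: (@mulgI _ (l0 * lam * f0)); rewrite -hl h10 -h00.
  by rewrite !mulgA mulgK hl mulgK.
rewrite -h01 hl hf hr /commute.
have E : l0 * lam * (z * f0) * (f0^-1 * lam^-1 * f0 * r0) = l0 * (lam * z * lam^-1) * f0 * r0.
  by rewrite !mulgA mulgK.
rewrite E; split => [h|h].
- have h' : lam * z * lam^-1 = z.
    apply: (@mulIg _ (f0 * r0)); apply: (@mulgI _ l0); rewrite !mulgA; rewrite !mulgA in h; exact: h.
  by rewrite -{2}h' mulgVK.
- by rewrite h mulgK !mulgA.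
Qed.

Lemma square (H : groupType)
  (CT : forall x y z : H, y != 1 -> commute x y -> commute y z -> commute x z)
  (L R Fm Gm : bool -> bool -> H) :
  (forall a b c d, ~~ [&& a, b, c & d] -> L a b * Fm c d * R a b = Gm c d) ->
  (L true false = L false false -> L true true = L false true) ->
  (Fm false true = Fm false false -> Fm true true = Fm true false) ->
  L true true * Fm true true * R true true = Gm true true.
Proof.
move=> hag hL hF.
pose lam a b := (L false false)^-1 * L a b.
pose z c d := Fm c d * (Fm false false)^-1.
have C : forall a b c d, ~~ [&& a, b, c & d] -> commute (lam a b) (z c d).
  move=> a b c d h.
  apply: (key_agree (hag false false false false isT) (hag a b false false _)
           (hag false false c d isT)).1; last exact: hag.
  by rewrite !andbF.
apply: (key_agree (hag false false false false isT) (hag true true false false isT)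
           (hag false false true true isT)).2.
change (commute (lam true true) (z true true)).
have zE : forall c d, z c d = 1 -> Fm c d = Fm false false.
  by move=> c d /divg1_eq.
have lE : forall a b, lam a b = 1 -> L a b = L false false.
  by move=> a b /mulg1_eq; rewrite invgK => ->.
case: (eqVneq (lam true true) 1) => [-> | l11]; first exact: commute_sym (commute1 _).
case: (eqVneq (z true true) 1) => [-> | z11]; first exact: commute1.
have chain : forall c d a b, ~~ (c && d) -> ~~ (a && b) -> z c d != 1 -> lam a b != 1 ->
    commute (lam true true) (z true true).
  move=> c d a b hcd hab hz hl.
  apply: (CT _ (lam a b)) => //; last first.
    by apply: C; rewrite !andbT.
  apply: (CT _ (z c d)) => //.
    by apply: C.
  apply: commute_sym; apply: C; move: hab hcd; clear; by case: a; case: b; case: c; case: d.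
have [c [d [hcd hz]]] : exists c d, ~~ (c && d) /\ z c d != 1.
  case: (eqVneq (z true false) 1) => [h1|h1]; last by exists true, false.
  case: (eqVneq (z false true) 1) => [h2|h2]; last by exists false, true.
  have := hF (zE _ _ h2); rewrite (zE _ _ h1) => h3.
  by move: z11; rewrite /z h3 mulgV eqxx.
have [a [b [hab hl]]] : exists a b, ~~ (a && b) /\ lam a b != 1.
  case: (eqVneq (lam true false) 1) => [h1|h1]; last by exists true, false.
  case: (eqVneq (lam false true) 1) => [h2|h2]; last by exists false, true.
  have := hL (lE _ _ h1); rewrite (lE _ _ h2) => h3.
  by move: l11; rewrite /lam h3 mulVg eqxx.
exact: (chain c d a b).
Qed.

Lemma conj_eq (H : groupType) (u x v U X V : H) :
  u * x * v = U * X * V <-> U^-1 * u * x * (v * V^-1) = X.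
Proof.
split => h.
  have -> : U^-1 * u * x * (v * V^-1) = U^-1 * (u * x * v) * V^-1 by rewrite !mulgA.
  by rewrite h !mulgA mulVg mul1g mulgK.
by rewrite -h !mulgA mulgV mul1g mulgVK.
Qed.

Lemma cube7 (H : groupType)
  (CT : forall x y z : H, y != 1 -> commute x y -> commute y z -> commute x z)
  (pL pR PL PR qL qR QL QR xL xR XL XR m M : bool -> H) :
  (forall a b c d, ~~ [&& a, b, c & d] ->
     pL a * qL b * xL c * m d * xR c * qR b * pR a =
     PL a * QL b * XL c * M d * XR c * QR b * PR a) ->
  pL true * qL true * xL true * m true * xR true * qR true * pR true =
  PL true * QL true * XL true * M true * XR true * QR true * PR true.
Proof.
move=> hag.
pose L a b := (PL a * QL b)^-1 * (pL a * qL b).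
pose R a b := (qR b * pR a) * (QR b * PR a)^-1.
pose Fm c d := xL c * m d * xR c.
pose Gm c d := XL c * M d * XR c.
have conv : forall a b c d,
   (pL a * qL b * xL c * m d * xR c * qR b * pR a =
     PL a * QL b * XL c * M d * XR c * QR b * PR a) <->
   (L a b * Fm c d * R a b = Gm c d).
  move=> a b c d; rewrite /L /R /Fm /Gm.
  have -> : pL a * qL b * xL c * m d * xR c * qR b * pR a =
    (pL a * qL b) * (xL c * m d * xR c) * (qR b * pR a) by rewrite !mulgA.
  have -> : PL a * QL b * XL c * M d * XR c * QR b * PR a =
    (PL a * QL b) * (XL c * M d * XR c) * (QR b * PR a) by rewrite !mulgA.
  exact: conj_eq.
apply/conv; apply: (square CT).
- by move=> a b c d hn; apply/conv; exact: hag.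
- have Lw : forall a b, L a b = (QL b)^-1 * ((PL a)^-1 * pL a) * qL b.
    by move=> a b; rewrite /L invgM !mulgA.
  rewrite !Lw => h.
  have h' : (PL true)^-1 * pL true = (PL false)^-1 * pL false.
    apply: (@mulgI _ ((QL false)^-1)); apply: (@mulIg _ (qL false)); exact: h.
  by rewrite h'.
- rewrite /Fm => h.
  have h' : m true = m false.
    apply: (@mulgI _ (xL false)); apply: (@mulIg _ (xR false)); exact: h.
  by rewrite h'.
Qed.

End GroupLemmas.

Scheme gen_mind := Induction for gen Sort Prop
  with gen_rhs_mind := Induction for gen_rhs Sort Prop.

Section Gram.
Variables (N Sigma : finType) (G : cfg N Sigma).
Hypothesis HG : Defs.linear G.

Notation rule := (N * seq (N + Sigma))%type.

Definition getnt (x : N + Sigma) : option N := if x is inl B then Some B else None.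
Definition nt (r : rule) : option N := ohead (pmap getnt r.2).
Definition sub (y : seq Sigma) (x : N + Sigma) : seq Sigma :=
  match x with inl _ => y | inr a => [:: a] end.
Fixpoint yield (ds : seq rule) : seq Sigma :=
  if ds is r :: ds' then flatten (map (sub (yield ds')) r.2) else [::].
Fixpoint wf (X : N) (ds : seq rule) : bool :=
  if ds is r :: ds' then
    [&& r \in rules G, r.1 == X & if nt r is Some B then wf B ds' else nilp ds']
  else true.
Fixpoint endp (X : N) (ds : seq rule) : option N :=
  if ds is r :: ds' then (if nt r is Some B then endp B ds' else None) else Some X.
Definition valid X ds := wf X ds && (endp X ds == None).

Fixpoint lpart (s : seq (N + Sigma)) : seq Sigma :=
  if s is x :: s' then (if x is inr a then a :: lpart s' else [::]) else [::].
Definition terms (s : seq (N + Sigma)) : seq Sigma :=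
  pmap (fun x => if x is inr a then Some a else None) s.
Fixpoint rpart (s : seq (N + Sigma)) : seq Sigma :=
  if s is x :: s' then (if x is inr _ then rpart s' else terms s') else [::].

Lemma flat_sub0 y s : ~~ has (@is_nonterm N Sigma) s -> flatten (map (sub y) s) = terms s.
Proof. by elim: s => [|[B|a] s IH] //= h; rewrite IH. Qed.

Lemma flat_sub y s : count (@is_nonterm N Sigma) s <= 1 -> has (@is_nonterm N Sigma) s ->
  flatten (map (sub y) s) = lpart s ++ y ++ rpart s.
Proof.
elim: s => [|[B|a] s IH] //=.
  move=> hc _; rewrite flat_sub0 //; rewrite has_count; move: hc; case: (count _ s) => //.
by rewrite add0n => hc hh; rewrite IH.
Qed.

Lemma nt_has (r : rule) : (nt r != None) = has (@is_nonterm N Sigma) r.2.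
Proof. by rewrite /nt; case: r => A s /=; elim: s => [|[B|a] s IH]. Qed.

Fixpoint ctxL (ds : seq rule) : seq Sigma :=
  if ds is r :: ds' then lpart r.2 ++ ctxL ds' else [::].
Fixpoint ctxR (ds : seq rule) : seq Sigma :=
  if ds is r :: ds' then ctxR ds' ++ rpart r.2 else [::].

Lemma ctxL_cat ds es : ctxL (ds ++ es) = ctxL ds ++ ctxL es.
Proof. by elim: ds => //= r ds ->; rewrite catA. Qed.
Lemma ctxR_cat ds es : ctxR (ds ++ es) = ctxR es ++ ctxR ds.
Proof. by elim: ds => [|r ds IH] /=; [rewrite cats0 | rewrite IH catA]. Qed.

Lemma wf_cat X ds es :
  wf X (ds ++ es) = wf X ds && (if endp X ds is Some Y then wf Y es else nilp es).
Proof.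
elim: ds X => [|r ds IH] X //=.
case: (nt r) => [B|] /=.
  by rewrite IH !andbA.
by rewrite /nilp size_cat addn_eq0 !andbA.
Qed.

Lemma endp_cat X ds es :
  endp X (ds ++ es) = if endp X ds is Some Y then endp Y es else None.
Proof. by elim: ds X => [|r ds IH] X //=; case: (nt r). Qed.

Lemma wf_all X ds : wf X ds -> all (mem (rules G)) ds.
Proof.
elim: ds X => [|r ds IH] X //= /and3P [hr _ h]; rewrite hr /=.
by case: (nt r) h => [B|]; [exact: IH | case: ds {IH}].
Qed.

Lemma yield_cat X ds es Y : wf X ds -> endp X ds = Some Y ->
  yield (ds ++ es) = ctxL ds ++ yield es ++ ctxR ds.
Proof.
elim: ds X => [|r ds IH] X /=; first by rewrite cats0.
case/and3P=> hr _; case hn: (nt r) => [B|] // hw he.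
rewrite (flat_sub _ (HG hr)); last by rewrite -nt_has hn.
by rewrite (IH B hw he) !catA.
Qed.


Lemma pmap_getnt s B : count (@is_nonterm N Sigma) s <= 1 -> inl B \in s -> pmap getnt s = [:: B].
Proof.
elim: s => [|[B'|a] s IH] //=.
  move=> hc; rewrite in_cons => /orP [/eqP [->]|hin].
    suff -> : pmap getnt s = [::] by [].
    move: hc; rewrite add1n ltnS leqn0 => /eqP.
    elim: s {IH} => [|[C|c] s IHs] //=.
  have : count (@is_nonterm N Sigma) s == 0 by move: hc; rewrite add1n ltnS leqn0.
  rewrite -leqn0 leqNgt -has_count => /hasPn /(_ _ hin) //.
Qed.

Lemma gen_rhs_sub y s : (forall B, inl B \in s -> gen G B y) ->
  gen_rhs G s (flatten (map (sub y) s)).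
Proof.
elim: s => [|[B|a] s IH] h /=; first exact: gen_nil.
  apply: gen_nonterm; first by apply: h; rewrite mem_head.
  by apply: IH => B' hB; apply: h; rewrite in_cons hB orbT.
apply: gen_term; apply: IH => B' hB; apply: h; by rewrite in_cons hB orbT.
Qed.

Lemma valid_gen X ds : valid X ds -> gen G X (yield ds).
Proof.
elim: ds X => [|r ds IH] X; first by rewrite /valid.
rewrite /valid /= => /andP [/and3P [hr /eqP hX hn] he].
have hr' : (X, r.2) \in rules G by rewrite -hX -surjective_pairing.
apply: (gen_rule hr'); apply: gen_rhs_sub => B hB.
have := pmap_getnt (HG hr) hB; rewrite /nt in hn he; move=> hp; rewrite hp /= in hn he.
by apply: IH; rewrite /valid hn he.
Qed.


Lemma flat_sub_indep y y' s : ~~ has (@is_nonterm N Sigma) s ->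
  flatten (map (sub y) s) = flatten (map (sub y') s).
Proof. by move=> h; rewrite !flat_sub0. Qed.

Lemma gen_valid_aux :
  (forall A w, gen G A w -> exists ds, valid A ds /\ yield ds = w) /\
  (forall s w, gen_rhs G s w -> count (@is_nonterm N Sigma) s <= 1 ->
     exists ds, (forall B, inl B \in s -> valid B ds) /\ flatten (map (sub (yield ds)) s) = w).
Proof.
pose P := fun A w (_ : gen G A w) => exists ds, valid A ds /\ yield ds = w.
pose P0 := fun s w (_ : gen_rhs G s w) => count (@is_nonterm N Sigma) s <= 1 ->
     exists ds, (forall B, inl B \in s -> valid B ds) /\ flatten (map (sub (yield ds)) s) = w.
have c1 : forall A rhs w (i : (A, rhs) \in rules G) (g : gen_rhs G rhs w), P0 rhs w g -> P A w (gen_rule i g).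
  move=> A rhs w i g /(_ (HG i)) [ds [hv hw]].
  case hn: (nt (A, rhs)) => [B|].
    exists ((A, rhs) :: ds); split; last exact: hw.
    have hB : inl B \in rhs.
      move: hn; rewrite /nt /=; elim: rhs {hv hw i g} => [|[C|c] s IH] //=.
        by move=> [->]; rewrite mem_head.
    by move: (hv B hB); rewrite /valid /= i eqxx hn.
  exists [:: (A, rhs)]; split; first by rewrite /valid /= i eqxx hn.
  have hh : ~~ has (@is_nonterm N Sigma) rhs by rewrite -(nt_has (A, rhs)) hn.
  by rewrite -hw; exact: flat_sub_indep.
have c2 : P0 [::] [::] (gen_nil G) by move=> _; exists [::].
have c3 : forall a rhs w (g : gen_rhs G rhs w), P0 rhs w g -> P0 (inr a :: rhs) (a :: w) (gen_term a g).
  move=> a rhs w g IH /= hc; have [ds [hv hw]] := IH hc.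
  exists ds; split; last by rewrite /= hw.
  by move=> B; rewrite in_cons /= => /hv.
have c4 : forall B rhs u v (g : gen G B u), P B u g -> forall g0 : gen_rhs G rhs v, P0 rhs v g0 ->
    P0 (inl B :: rhs) (u ++ v) (gen_nonterm g g0).
  move=> B rhs u v g [ds [hv hu]] g0 IH0 /= hc.
  have hc0 : count (@is_nonterm N Sigma) rhs <= 0.
    by move: hc; rewrite [count _ (_ :: _)]/= add1n ltnS.

  have [ds0 [_ hw0]] := IH0 (leq_trans hc0 (leq0n 1)).
  have hh : ~~ has (@is_nonterm N Sigma) rhs by rewrite has_count -leqNgt.
  exists ds; split.
    move=> B'; rewrite in_cons => /orP [/eqP [->] //|hB'].
    by move: hh => /hasPn /(_ _ hB').
  by rewrite /= hu (flat_sub_indep _ (yield ds0) hh) hw0.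
split.
  move=> A w h; exact: (@gen_mind N Sigma G P P0 c1 c2 c3 c4 A w h).
move=> s w h; exact: (@gen_rhs_mind N Sigma G P P0 c1 c2 c3 c4 s w h).
Qed.


Definition RR := undup (rules G).
Definition rank (r : rule) : nat := index r RR.
Definition BB : nat := (size RR).+1.
Definition code (ds : seq rule) : nat := foldl (fun acc r => acc * BB + rank r) 0 ds.
Definition ltsl (ds es : seq rule) : bool :=
  (size ds < size es) || ((size ds == size es) && (code ds < code es)).

Lemma foldl_code z ds : foldl (fun acc r => acc * BB + rank r) z ds = z * BB ^ size ds + code ds.
Proof.
elim: ds z => [|x w IH] z /=; first by rewrite muln1 addn0.
by rewrite /code /= !IH mul0n add0n expnS mulnDl addnA mulnA.
Qed.

Lemma code_cat u v : code (u ++ v) = code u * BB ^ size v + code v.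
Proof. by rewrite /code foldl_cat foldl_code. Qed.

Lemma code_rcons u x : code (rcons u x) = code u * BB + rank x.
Proof. by rewrite -cats1 code_cat /= /code /= expn1. Qed.

Lemma rank_lt r : r \in rules G -> rank r < BB.
Proof. by move=> h; rewrite /rank /BB ltnS; apply: ltnW; rewrite index_mem mem_undup. Qed.

Lemma rank_inj r s : r \in rules G -> s \in rules G -> rank r = rank s -> r = s.
Proof.
move=> hr hs he.
have hr' : r \in RR by rewrite mem_undup.
have hs' : s \in RR by rewrite mem_undup.
by rewrite -(nth_index r hr') -(nth_index r hs'); rewrite /rank in he; rewrite he.
Qed.

Lemma code_inj u v : size u = size v -> all (mem (rules G)) u -> all (mem (rules G)) v ->
  code u = code v -> u = v.
Proof.
elim/last_ind: u v => [|u x IH] v; first by case: v.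
elim/last_ind: v => [|v y _]; first by rewrite size_rcons.
rewrite !size_rcons !all_rcons !code_rcons => [[hs]] /andP [hx hu] /andP [hy hv] he.
have hb : 0 < BB by [].
have h1 : rank x = rank y.
  by move: (congr1 (modn^~ BB) he); rewrite !modnMDl !modn_small // rank_lt.
have h2 : code u = code v.
  by move: (congr1 (divn^~ BB) he); rewrite !divnMDl // !divn_small ?rank_lt // !addn0.
by rewrite (IH v hs hu hv h2) (rank_inj hx hy h1).
Qed.

Lemma ltsl_ctx a t s c : ltsl t s -> ltsl (a ++ t ++ c) (a ++ s ++ c).
Proof.
rewrite /ltsl !size_cat => /orP [h|/andP [/eqP hs hc]].
  by rewrite ltn_add2l ltn_add2r h.
rewrite hs eqxx ltnn /= !code_cat !size_cat hs ltn_add2l ltn_add2r ltn_pmul2r //.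
by rewrite expn_gt0.
Qed.

Lemma ltsl_trans a b c : ltsl a b -> ltsl b c -> ltsl a c.
Proof.
rewrite /ltsl => /orP [h1|/andP [/eqP e1 h1]] /orP [h2|/andP [/eqP e2 h2]].
- by rewrite (ltn_trans h1 h2).
- by rewrite -e2 h1.
- by rewrite e1 h2.
- by rewrite e1 e2 eqxx (ltn_trans h1 h2) orbT.
Qed.

Lemma ltsl_irr a : ltsl a a = false.
Proof. by rewrite /ltsl !ltnn andbF. Qed.

Lemma ltsl_total a b : all (mem (rules G)) a -> all (mem (rules G)) b ->
  a = b \/ ltsl a b \/ ltsl b a.
Proof.
move=> ha hb; rewrite /ltsl.
case: (ltngtP (size a) (size b)) => hs; [by right; left | by right; right |].
rewrite ?hs ?eqxx /=.
case: (ltngtP (code a) (code b)) => hc; [by right; left | by right; right |].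
by left; apply: code_inj.
Qed.

Lemma ltsl_ind (P : seq rule -> Prop) :
  (forall ds, (forall es, ltsl es ds -> P es) -> P ds) -> forall ds, P ds.
Proof.
move=> H.
suff : forall n c ds, size ds = n -> code ds = c -> P ds by move=> h ds; exact: h.
elim/ltn_ind=> n IHn; elim/ltn_ind=> c IHc ds hn hc; apply: H => es.
rewrite /ltsl => /orP [h|/andP [/eqP e h]].
  by apply: (IHn (size es)); rewrite -?hn.
by apply: (IHc (code es)); rewrite -?hc // e.
Qed.


Definition canon X ds := wf X ds /\ forall es, wf X es -> endp X es = endp X ds -> ~~ ltsl es ds.

Lemma canon_nil X : canon X [::].
Proof. by split => // es _ _; rewrite /ltsl ltn0 /= andbF. Qed.

Lemma canon_uniq X ds es : canon X ds -> canon X es -> endp X ds = endp X es -> ds = es.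
Proof.
move=> [hd cd] [he ce] hE.
case: (ltsl_total (wf_all hd) (wf_all he)) => [//|[h|h]].
  by move: (ce ds hd hE); rewrite h.
by move: (cd es he (esym hE)); rewrite h.
Qed.

Lemma noncanon X ds : wf X ds -> ~ canon X ds ->
  exists es, [/\ wf X es, endp X es = endp X ds & ltsl es ds].
Proof.
move=> hw hc; apply: NNPP => hn; apply: hc; split => // es hes hE.
apply/negP => hl; apply: hn; by exists es.
Qed.

Lemma wf_prefix X ds es : wf X (ds ++ es) -> wf X ds.
Proof. by rewrite wf_cat => /andP []. Qed.

Lemma valid_cat X s M Y : wf X s -> endp X s = Some Y -> valid X (s ++ M) = valid Y M.
Proof. by move=> hw he; rewrite /valid wf_cat endp_cat hw he. Qed.

Lemma valid_repl X s t M : wf X s -> wf X t -> endp X s = endp X t -> valid X (s ++ M) = valid X (t ++ M).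
Proof. by move=> hs ht he; rewrite /valid !wf_cat !endp_cat hs ht he. Qed.

Lemma step X ds : wf X ds -> canon X ds \/
  exists K e ds', [/\ ds = K ++ e :: ds', canon X K & ~ canon X (rcons K e)].
Proof.
move=> hw.
suff H : forall m b, size ds - b = m -> b <= size ds -> canon X (take b ds) -> canon X ds \/
  exists K e ds', [/\ ds = K ++ e :: ds', canon X K & ~ canon X (rcons K e)].
  by apply: (H _ 0 erefl (leq0n _)); rewrite take0; exact: canon_nil.
elim=> [|m IH] b hm hb hc.
  have hb' : b = size ds by apply/eqP; rewrite eqn_leq hb -subn_eq0 hm.
  by left; rewrite hb' take_size in hc.
have hlt : b < size ds by rewrite -subn_gt0 hm.
case: (classic (canon X (take b.+1 ds))) => h.
  by apply: (IH b.+1) => //; rewrite subnS hm.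
right; exists (take b ds), (nth (X, [::]) ds b), (drop b.+1 ds); split => //.
  by rewrite -drop_nth // cat_take_drop.
by rewrite -take_nth.
Qed.

Fixpoint built (X : N) (es ds : seq rule) : Prop :=
  match es with
  | [::] => canon X ds
  | e :: es' => exists K ds', [/\ ds = K ++ e :: ds', canon X K, endp X K = Some e.1 &
        (if nt e is Some B then built B es' ds' else ds' = [::] /\ es' = [::])]
  end.

Fixpoint segs (n : nat) (X : N) (ds : seq rule) : Prop :=
  match n with
  | 0 => valid X ds
  | n'.+1 => exists s ds', [/\ ds = s ++ ds', wf X s,
        (exists t, [/\ wf X t, endp X t = endp X s & ltsl t s]) &
        (if endp X s is Some Y then segs n' Y ds' else ds' = [::] /\ n' = 0)]
  end.

Lemma decomp k X ds : valid X ds -> (exists es, size es <= k /\ built X es ds) \/ segs k.+1 X ds.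
Proof.
elim: k X ds => [|k IH] X ds hv;
 (have hw : wf X ds by case/andP: hv);
 (case: (step hw) => [hc|[K [e [ds' [hds hK hnc]]]]]; first by left; exists [::]);
 (move: hv; rewrite hds /valid wf_cat endp_cat => /andP [/andP [hwK hrest] hend]);
 (case hKe: (endp X K) hrest hend => [Y|] //= /and3P [hein /eqP he1 hnt]);
 (have hwK' : wf X (rcons K e) by rewrite -cats1 wf_cat hwK hKe /= hein he1 eqxx /=; case: (nt e) hnt);
 (have [t [htw hte htl]] := noncanon hwK' hnc);
 (have hKe' : endp X (rcons K e) = nt e by rewrite -cats1 endp_cat hKe /=; case: (nt e));
 case hn: (nt e) hnt => [B|] hnt hend.
- right; exists (rcons K e), ds'; split; rewrite ?cat_rcons //.
    by exists t; rewrite hte.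
  by rewrite hKe' hn /valid hnt hend.
- right; exists (rcons K e), ds'; split; rewrite ?cat_rcons //.
    by exists t; rewrite hte.
  by rewrite hKe' hn; case: ds' {hds} hnt.
- have hvB : valid B ds' by rewrite /valid hnt hend.
  case: (IH B ds' hvB) => [[es [hs hb]]|hseg].
    left; exists (e :: es); split => //; exists K, ds'; split => //; first by rewrite he1.
    by rewrite hn.
  right; exists (rcons K e), ds'; split; rewrite ?cat_rcons //.
    by exists t; rewrite hte.
  by rewrite hKe' hn.
- left; exists [:: e]; split => //; exists K, ds'; split => //; first by rewrite he1.
  by rewrite hn; case: ds' {hds} hnt.
Qed.


Lemma built_uniq es X ds ds' : built X es ds -> built X es ds' -> valid X ds -> valid X ds' -> ds = ds'.
Proof.
elim: es X ds ds' => [|e es IH] X ds ds' /=.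
  move=> h1 h2 /andP [_ /eqP e1] /andP [_ /eqP e2]; apply: canon_uniq h1 h2 _; by rewrite e1 e2.
move=> [K1 [d1 [-> hK1 hE1 hr1]]] [K2 [d2 [-> hK2 hE2 hr2]]].
have <- : K1 = K2 by apply: canon_uniq hK1 hK2 _; rewrite hE1 hE2.
rewrite !(valid_cat _ hK1.1 hE1).
rewrite /valid /= -!andbA => /and4P [_ _ h1 h1'] /and4P [_ _ h2 h2'].
case hn: (nt e) hr1 hr2 h1 h1' h2 h2' => [B|] hr1 hr2 h1 h1' h2 h2'.
  by congr (_ ++ _ :: _); apply: (IH B); rewrite // /valid ?h1 ?h2 ?h1' ?h2'.
by case: hr1 => ->; case: hr2 => ->.
Qed.

Lemma built_all es X ds : built X es ds -> wf X ds -> all (mem (rules G)) es.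
Proof.
elim: es X ds => [|e es IH] X ds //= [K [d [hds hK hE hr]]] hw.
have := wf_all hw; rewrite hds all_cat /= => /and3P [_ he hd].
rewrite he /=.
case hn: (nt e) hr => [B|] hr; last by case: hr => _ ->.
apply: (IH B d hr).
move: hw; rewrite hds wf_cat hE /= => /andP [_ /and3P [_ _]]; by rewrite hn.
Qed.

Lemma valid_last X ds : valid X ds -> exists2 r, r \in ds & nt r = None.
Proof.
elim: ds X => [|r ds IH] X; first by rewrite /valid.
rewrite /valid /= => /andP [/and3P [_ _ hn] he].
case hnt: (nt r) hn he => [B|] hn he.
  by have [r' h1 h2] := IH B (introT andP (conj hn he)); exists r' => //; rewrite in_cons h1 orbT.
by exists r => //; rewrite mem_head.
Qed.


Fixpoint seqsle (n : nat) : seq (seq rule) :=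
  if n is n'.+1 then [::] :: [seq r :: s | r <- RR, s <- seqsle n'] else [:: [::]].

Lemma size_seqsle n : size (seqsle n.+1) = 1 + size RR * size (seqsle n).
Proof. by rewrite /= size_allpairs. Qed.

Lemma mem_seqsle n es : size es <= n -> all (mem (rules G)) es -> es \in seqsle n.
Proof.
elim: n es => [|n IH] [|e es] //=.
rewrite ltnS => hs /andP [he hes]; rewrite in_cons /=.
apply: (allpairs_f (fun r s => r :: s)); first by rewrite mem_undup.
exact: IH.
Qed.

Definition pickw (es : seq rule) : option (seq Sigma) :=
  match excluded_middle_informative (exists ds, valid (start G) ds /\ built (start G) es ds) with
  | left h => Some (yield (proj1_sig (constructive_indefinite_description _ h)))
  | right _ => None
  end.

Definition TT := undup (pmap pickw (seqsle 3)).

Lemma pickw_spec es w : pickw es = Some w ->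
  exists ds, [/\ valid (start G) ds, built (start G) es ds & w = yield ds].
Proof.
rewrite /pickw; case: excluded_middle_informative => // h [<-].
case: (constructive_indefinite_description _ h) => ds [h1 h2] /=; by exists ds.
Qed.

Lemma TT_lang w : w \in TT -> exists ds, valid (start G) ds /\ w = yield ds.
Proof.
rewrite /TT mem_undup mem_pmap => /mapP [es _ /esym /pickw_spec [ds [h1 _ h3]]].
by exists ds.
Qed.

Lemma TT_built ds es : valid (start G) ds -> built (start G) es ds -> size es <= 3 ->
  yield ds \in TT.
Proof.
move=> hv hb hs.
have hes : es \in seqsle 3.
  apply: mem_seqsle => //; apply: (built_all hb); by case/andP: hv.
rewrite /TT mem_undup mem_pmap.
have -> : Some (yield ds) = pickw es.
  rewrite /pickw; case: excluded_middle_informative => [h|hn]; last first.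
    by exfalso; apply: hn; exists ds.
  case: (constructive_indefinite_description _ h) => ds' [h1 h2] /=.
  by rewrite (built_uniq hb h2 hv h1).
exact: map_f.
Qed.

Lemma size_TT : size TT <= 1 + size RR * (1 + size RR * (1 + size RR)).
Proof.
apply: (leq_trans (size_undup _)); rewrite size_pmap; apply: (leq_trans (count_size _ _)).
by rewrite (size_seqsle 2) (size_seqsle 1) (size_seqsle 0) /= muln1.
Qed.


Definition pk (b : bool) (t s : seq rule) := if b then s else t.

Lemma chain4 x0 x1 x2 x3 x4 (a b c e : bool) :
  (if a then x0 = x1 else ltsl x0 x1) -> (if b then x1 = x2 else ltsl x1 x2) ->
  (if c then x2 = x3 else ltsl x2 x3) -> (if e then x3 = x4 else ltsl x3 x4) ->
  ~~ [&& a, b, c & e] -> ltsl x0 x4.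
Proof.
case: a; case: b; case: c; case: e => /= h1 h2 h3 h4 // _; subst => //;
  eauto using ltsl_trans.
Qed.

Lemma pk_rel b t s P Q : ltsl t s ->
  if b then P ++ pk b t s ++ Q = P ++ s ++ Q else ltsl (P ++ pk b t s ++ Q) (P ++ s ++ Q).
Proof. by case: b => //=; exact: ltsl_ctx. Qed.

Lemma agree_all (Gam : finType) (f g : seq Sigma -> seq Gam) : is_morphism f -> is_morphism g ->
  (forall w, w \in TT -> f w = g w) -> forall ds, valid (start G) ds -> f (yield ds) = g (yield ds).
Proof.
move=> [f0 fc] [g0 gc] hT.
pose F w := enc (f w). pose Gf w := enc (g w).
have Fc : forall u v, F (u ++ v) = (F u * F v)%g by move=> u v; rewrite /F fc enc_cat.
have Gc : forall u v, Gf (u ++ v) = (Gf u * Gf v)%g by move=> u v; rewrite /Gf gc enc_cat.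
suff H : forall ds, valid (start G) ds -> F (yield ds) = Gf (yield ds).
  by move=> ds hv; apply: (@enc_inj Gam); exact: H.
elim/ltsl_ind => ds IH hv.
case: (decomp 3 hv) => [[es [hs hb]]|].
  by rewrite /F /Gf hT // (TT_built hv hb hs).
move=> /= [s1 [r1 [hd1 hw1 [t1 [tw1 te1 tl1]] hr1]]].
case he1: (endp (start G) s1) hr1 => [X1|]; last by case.
move=> [s2 [r2 [hd2 hw2 [t2 [tw2 te2 tl2]] hr2]]].
case he2: (endp X1 s2) hr2 => [X2|]; last by case.
move=> [s3 [r3 [hd3 hw3 [t3 [tw3 te3 tl3]] hr3]]].
case he3: (endp X2 s3) hr3 => [X3|]; last by case.
move=> [s4 [r4 [hd4 hw4 [t4 [tw4 te4 tl4]] _]]].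
subst ds r1 r2 r3.
have pkw : forall X b t s, wf X t -> wf X s -> wf X (pk b t s) by move=> X [].
have pke : forall X b t s, endp X t = endp X s -> endp X (pk b t s) = endp X s by move=> X [].
pose vd a b c e := pk a t1 s1 ++ (pk b t2 s2 ++ (pk c t3 s3 ++ (pk e t4 s4 ++ r4))).
have hval : forall a b c e, valid (start G) (vd a b c e).
  move=> a b c e; rewrite /vd.
  rewrite (valid_cat _ (pkw _ a _ _ tw1 hw1) (etrans (pke _ a _ _ te1) he1)).
  rewrite (valid_cat _ (pkw _ b _ _ tw2 hw2) (etrans (pke _ b _ _ te2) he2)).
  rewrite (valid_cat _ (pkw _ c _ _ tw3 hw3) (etrans (pke _ c _ _ te3) he3)).
  rewrite (valid_repl _ (pkw _ e _ _ tw4 hw4) hw4 (pke _ e _ _ te4)).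
  by move: hv; rewrite (valid_cat _ hw1 he1) (valid_cat _ hw2 he2) (valid_cat _ hw3 he3).
have hlt : forall a b c e, ~~ [&& a, b, c & e] ->
    ltsl (vd a b c e) (s1 ++ (s2 ++ (s3 ++ (s4 ++ r4)))).
  move=> a b c e hn.
  apply: (chain4 (x1 := vd true b c e) (x2 := vd true true c e) (x3 := vd true true true e) _ _ _ _ hn).
  - exact: (pk_rel a [::] _ tl1).
  - exact: (pk_rel b s1 _ tl2).
  - have := pk_rel c (s1 ++ s2) (pk e t4 s4 ++ r4) tl3; rewrite -!catA /vd /=; by case: (c).
  - have := pk_rel e (s1 ++ s2 ++ s3) r4 tl4; rewrite -!catA /vd /=; by case: (e).
have hy : forall a b c e, yield (vd a b c e) =
    ctxL (pk a t1 s1) ++ ctxL (pk b t2 s2) ++ ctxL (pk c t3 s3) ++ yield (pk e t4 s4 ++ r4) ++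
    ctxR (pk c t3 s3) ++ ctxR (pk b t2 s2) ++ ctxR (pk a t1 s1).
  move=> a b c e; rewrite /vd catA.
  have w12 : wf (start G) (pk a t1 s1 ++ pk b t2 s2).
    by rewrite wf_cat (pkw _ a _ _ tw1 hw1) (etrans (pke _ a _ _ te1) he1) (pkw _ b _ _ tw2 hw2).
  have e12 : endp (start G) (pk a t1 s1 ++ pk b t2 s2) = Some X2.
    by rewrite endp_cat (etrans (pke _ a _ _ te1) he1) (etrans (pke _ b _ _ te2) he2).
  rewrite (yield_cat _ w12 e12).
  rewrite (yield_cat _ (pkw _ c _ _ tw3 hw3) (etrans (pke _ c _ _ te3) he3)).
  by rewrite ctxL_cat ctxR_cat !catA.
have hF : forall a b c e, F (yield (vd a b c e)) =
    (F (ctxL (pk a t1 s1)) * F (ctxL (pk b t2 s2)) * F (ctxL (pk c t3 s3)) *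
     F (yield (pk e t4 s4 ++ r4)) * F (ctxR (pk c t3 s3)) * F (ctxR (pk b t2 s2)) *
     F (ctxR (pk a t1 s1)))%g.
  by move=> a b c e; rewrite hy !catA !Fc.
have hG : forall a b c e, Gf (yield (vd a b c e)) =
    (Gf (ctxL (pk a t1 s1)) * Gf (ctxL (pk b t2 s2)) * Gf (ctxL (pk c t3 s3)) *
     Gf (yield (pk e t4 s4 ++ r4)) * Gf (ctxR (pk c t3 s3)) * Gf (ctxR (pk b t2 s2)) *
     Gf (ctxR (pk a t1 s1)))%g.
  by move=> a b c e; rewrite hy !catA !Gc.
have := hF true true true true; rewrite /vd /= => ->.
have := hG true true true true; rewrite /vd /= => ->.
refine (@cube7 aff aff_CT
  (fun a => F (ctxL (pk a t1 s1))) (fun a => F (ctxR (pk a t1 s1)))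
  (fun a => Gf (ctxL (pk a t1 s1))) (fun a => Gf (ctxR (pk a t1 s1)))
  (fun b => F (ctxL (pk b t2 s2))) (fun b => F (ctxR (pk b t2 s2)))
  (fun b => Gf (ctxL (pk b t2 s2))) (fun b => Gf (ctxR (pk b t2 s2)))
  (fun c => F (ctxL (pk c t3 s3))) (fun c => F (ctxR (pk c t3 s3)))
  (fun c => Gf (ctxL (pk c t3 s3))) (fun c => Gf (ctxR (pk c t3 s3)))
  (fun e => F (yield (pk e t4 s4 ++ r4))) (fun e => Gf (yield (pk e t4 s4 ++ r4))) _).
move=> a b c e hn /=.
rewrite -hF -hG; apply: IH; [exact: hlt | exact: hval].
Qed.


Lemma TT_bound : size TT <= 2 * size RR ^ 3.
Proof.
have hRR : forall r, r \in rules G -> r \in RR by move=> r; rewrite mem_undup.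
case hm: (size RR) => [|[|m]].
- case hT: TT => [|w T] //.
  have : w \in TT by rewrite hT mem_head.
  case/TT_lang => [[|r ds] [hv _]]; first by move: hv; rewrite /valid.
  move: hv; rewrite /valid /= => /andP [/and3P [hr _ _] _].
  by move: (hRR r hr); move: hm; case: RR.
- have [r0 hR] : exists r0, RR = [:: r0] by move: hm; case: RR => [|r0 [|]] //; exists r0.
  have h1 : forall r, r \in rules G -> r = r0.
    by move=> r /hRR; rewrite hR inE => /eqP.
  apply: (@leq_trans (size [:: yield [:: r0]])) => //.
  apply: uniq_leq_size; first exact: undup_uniq.
  move=> w /TT_lang [ds [hv ->]].
  have [r hr hnr] := valid_last hv.
  have hwa := wf_all (proj1 (andP hv)).
  have er : r = r0 by apply: h1; exact: (allP hwa).
  case: ds hv hr hwa => [|r1 ds]; first by rewrite /valid.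
  rewrite /valid /= => /andP [/and3P [hr1 _ hn] _] _ _.
  have e1 := h1 _ hr1; subst r1 r.
  by rewrite hnr in hn; case: ds hn => //; rewrite inE.
- apply: (leq_trans size_TT); rewrite hm !expnS expn0; nia.
Qed.


End Gram.

Require Import Defs.

Theorem theorem1 (N Sigma : finType) (G : cfg N Sigma) :
  linear G ->
  exists T : seq (seq Sigma),
    test_set (lang G) T /\ size T <= 2 * nrules G ^ 3.
Proof.
move=> HG; exists (TT G); split; last exact: TT_bound.
split.
  by move=> w /TT_lang [ds [hv ->]]; exact: (valid_gen HG).
move=> Gam f g hf hg hT w hw.
have [ds [hv <-]] := (gen_valid_aux HG).1 _ _ hw.
exact: (agree_all HG hf hg hT hv).
Qed.
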